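(* In the process algebra $\mathcal{G}$ described in the context, let $P\in\{D,C,C'\}$ and let $Q$ be a process with $P\Longrightarrow P\,\|\,Q$. Then $P\,\|\,Q\Longrightarrow P$.
   Context: Process algebras: a triple $(\mathcal{C},\mathcal{A},\Delta)$ of finitely many constants, actions (including silent $\tau$) and rules $X\stackrel{\ell}{\longrightarrow}P$. Processes: $P::=\epsilon\mid X\mid PP'\mid P\|P'$, sequential composition associative, parallel composition associative and commutative, $\epsilon$ a unit for both. Semantics: rules of $\Delta$; if $P\stackrel{\ell}{\longrightarrow}P'$ then $PQ\stackrel{\ell}{\longrightarrow}P'Q$, $P\|Q\stackrel{\ell}{\longrightarrow}P'\|Q$, $Q\|P\stackrel{\ell}{\longrightarrow}Q\|P'$. $\Longrightarrow$ is the reflexive transitive closure of $\stackrel{\tau}{\longrightarrow}$. The algebra $\mathcal{G}$: fix a finite alphabet $\Sigma$ with $|\Sigma|\ge2$ and a Post Correspondence instance $\mathrm{INST}=\{(u_1,v_1),\dots,(u_n,v_n)\}$ with $u_k,v_k\in\Sigma^{+}$; let $\mathcal{N}=\{1,\dots,n\}$. Actions: $\{\lambda_U,\lambda_V,\lambda_D,\lambda_I,\lambda_S,\lambda_Z\}\cup\mathcal{N}\cup\Sigma\cup\{\tau\}$. Constants: $X,Y,Z,I,S,C,C',D,G,G',G_u,G_v,G_v'$, $U_k,V_k$ ($k\in\mathcal{N}$), and $W(\omega,k),W(\omega,0)$ for $k\in\mathcal{N}$ and $\omega$ a (possibly empty) suffix of $u_k$ or of $v_k$; $\mathcal{W}$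 is the set of these $W$-constants. Rules (with $k$ ranging over $\mathcal{N}$, $a$ over $\Sigma$, $W$ over $\mathcal{W}$): $X\stackrel{\lambda_U}{\longrightarrow}D\|G_v$, $X\stackrel{\tau}{\longrightarrow}D$, $Y\stackrel{\tau}{\longrightarrow}D$, $D\stackrel{\tau}{\longrightarrow}D\|G_u$, $D\stackrel{\lambda_D}{\longrightarrow}C$; $G_u\stackrel{\tau}{\longrightarrow}G_uU_k$, $G_u\stackrel{\lambda_U}{\longrightarrow}G_vU_k$, $G_u\stackrel{\tau}{\longrightarrow}G_v'$, $G_v'\stackrel{\tau}{\longrightarrow}G_v'V_k$, $G_v'\stackrel{\tau}{\longrightarrow}Z$; $G_v\stackrel{\tau}{\longrightarrow}G_vV_k$, $G_v\stackrel{\tau}{\longrightarrow}\epsilon$, $G_v\stackrel{\lambda_V}{\longrightarrow}Z$, $Z\stackrel{\tau}{\longrightarrow}\epsilon$, $Z\stackrel{\lambda_Z}{\longrightarrow}\epsilon$; $C\stackrel{\lambda_I}{\longrightarrow}I$, $C\stackrel{\lambda_S}{\longrightarrow}S$, $C\stackrel{\tau}{\longrightarrow}C\|G$, $C\stackrel{\tau}{\longrightarrow}C\|G_v$; $G\stackrel{\tau}{\longrightarrow}GU_k$, $G\stackrel{\tau}{\longrightarrow}GV_k$, $G\stackrel{\tau}{\longrightarrow}\epsilon$; $I\stackrel{\lambda_I}{\longrightarrow}C'$, $I\stackrel{k}{\longrightarrow}I$, $S\stackrel{\lambda_S}{\longrightarrow}C'$, $S\stackrel{a}{\longrightarrow}S$,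 $C'\stackrel{\tau}{\longrightarrow}C'\|G'$, $C'\stackrel{\tau}{\longrightarrow}\epsilon$; $G'\stackrel{\tau}{\longrightarrow}G'U_k$, $G'\stackrel{\tau}{\longrightarrow}G'V_k$, $G'\stackrel{\tau}{\longrightarrow}G'W$, $G'\stackrel{\tau}{\longrightarrow}G_v$, $G'\stackrel{\tau}{\longrightarrow}Z$; $U_k\stackrel{\tau}{\longrightarrow}W(u_k,k)$, $V_k\stackrel{\tau}{\longrightarrow}W(v_k,k)$; $W(a\omega,k)\stackrel{a}{\longrightarrow}W(\omega,k)$, $W(a\omega,0)\stackrel{a}{\longrightarrow}W(\omega,0)$, $W(\omega,k)\stackrel{k}{\longrightarrow}W(\omega,0)$, $W(a\omega,k)\stackrel{\tau}{\longrightarrow}W(\omega,k)$, $W(a\omega,0)\stackrel{\tau}{\longrightarrow}W(\omega,0)$, $W(\omega,k)\stackrel{\tau}{\longrightarrow}W(\omega,0)$, $W(\epsilon,0)\stackrel{\tau}{\longrightarrow}\epsilon$. *)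

(* Defs.v *)
From mathcomp Require Import all_boot.
Set Implicit Arguments. Unset Strict Implicit. Unset Printing Implicit Defensive.

Section G.
Variable Sigma : finType.
(* The PCP instance: the list [(u_1,v_1); ...; (u_n,v_n)]. *)
Variable inst : seq (seq Sigma * seq Sigma).

Definition npairs := size inst.
Definition inN (k : nat) : bool := (1 <= k <= npairs).
Definition uk (k : nat) : seq Sigma := (nth ([::], [::]) inst k.-1).1.
Definition vk (k : nat) : seq Sigma := (nth ([::], [::]) inst k.-1).2.

(* Constants of G.  cW w k is W(w,k); k = 0 encodes W(w,0). *)
Inductive const : Type :=
| cX | cY | cZ | cI | cS | cC | cC' | cD | cG | cG' | cGu | cGv | cGv'
| cU of nat | cV of nat | cW of seq Sigma & nat.

Definition validW (w : seq Sigma) (j : nat) : bool :=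
  ((j == 0) || inN j) &&
  [exists k : 'I_npairs.+1, inN k && (suffix w (uk k) || suffix w (vk k))].

Definition valid_const (c : const) : bool :=
  match c with
  | cU k | cV k => inN k
  | cW w j => validW w j
  | _ => true
  end.

Inductive act : Type :=
| lamU | lamV | lamD | lamI | lamS | lamZ
| aNum of nat
| aSym of Sigma
| tau.

Inductive proc : Type :=
| Eps
| Cst of const
| Seq of proc & proc
| Par of proc & proc.

Fixpoint proc_wf (p : proc) : bool :=
  match p with
  | Eps => true
  | Cst c => valid_const c
  | Seq p q | Par p q => proc_wf p && proc_wf q
  end.

Inductive cong : proc -> proc -> Prop :=
| cong_refl p : cong p p
| cong_sym p q : cong p q -> cong q p
| cong_trans p q r : cong p q -> cong q r -> cong p r
| cong_seq p p' q q' : cong p p' -> cong q q' -> cong (Seq p q) (Seq p' q')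
| cong_par p p' q q' : cong p p' -> cong q q' -> cong (Par p q) (Par p' q')
| cong_seqA p q r : cong (Seq (Seq p q) r) (Seq p (Seq q r))
| cong_parA p q r : cong (Par (Par p q) r) (Par p (Par q r))
| cong_parC p q : cong (Par p q) (Par q p)
| cong_seq0l p : cong (Seq Eps p) p
| cong_seq0r p : cong (Seq p Eps) p
| cong_par0r p : cong (Par p Eps) p.

Inductive rule : const -> act -> proc -> Prop :=
| r_X1 : rule cX lamU (Par (Cst cD) (Cst cGv))
| r_X2 : rule cX tau (Cst cD)
| r_Y : rule cY tau (Cst cD)
| r_D1 : rule cD tau (Par (Cst cD) (Cst cGu))
| r_D2 : rule cD lamD (Cst cC)
| r_Gu1 k : inN k -> rule cGu tau (Seq (Cst cGu) (Cst (cU k)))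
| r_Gu2 k : inN k -> rule cGu lamU (Seq (Cst cGv) (Cst (cU k)))
| r_Gu3 : rule cGu tau (Cst cGv')
| r_Gv'1 k : inN k -> rule cGv' tau (Seq (Cst cGv') (Cst (cV k)))
| r_Gv'2 : rule cGv' tau (Cst cZ)
| r_Gv1 k : inN k -> rule cGv tau (Seq (Cst cGv) (Cst (cV k)))
| r_Gv2 : rule cGv tau Eps
| r_Gv3 : rule cGv lamV (Cst cZ)
| r_Z1 : rule cZ tau Eps
| r_Z2 : rule cZ lamZ Eps
| r_C1 : rule cC lamI (Cst cI)
| r_C2 : rule cC lamS (Cst cS)
| r_C3 : rule cC tau (Par (Cst cC) (Cst cG))
| r_C4 : rule cC tau (Par (Cst cC) (Cst cGv))
| r_G1 k : inN k -> rule cG tau (Seq (Cst cG) (Cst (cU k)))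
| r_G2 k : inN k -> rule cG tau (Seq (Cst cG) (Cst (cV k)))
| r_G3 : rule cG tau Eps
| r_I1 : rule cI lamI (Cst cC')
| r_I2 k : inN k -> rule cI (aNum k) (Cst cI)
| r_S1 : rule cS lamS (Cst cC')
| r_S2 (a : Sigma) : rule cS (aSym a) (Cst cS)
| r_C'1 : rule cC' tau (Par (Cst cC') (Cst cG'))
| r_C'2 : rule cC' tau Eps
| r_G'1 k : inN k -> rule cG' tau (Seq (Cst cG') (Cst (cU k)))
| r_G'2 k : inN k -> rule cG' tau (Seq (Cst cG') (Cst (cV k)))
| r_G'3 w j : validW w j -> rule cG' tau (Seq (Cst cG') (Cst (cW w j)))
| r_G'4 : rule cG' tau (Cst cGv)
| r_G'5 : rule cG' tau (Cst cZ)
| r_U k : inN k -> rule (cU k) tau (Cst (cW (uk k) k))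
| r_V k : inN k -> rule (cV k) tau (Cst (cW (vk k) k))
| r_W1 (a : Sigma) w k : inN k -> validW (a :: w) k ->
    rule (cW (a :: w) k) (aSym a) (Cst (cW w k))
| r_W2 (a : Sigma) w : validW (a :: w) 0 ->
    rule (cW (a :: w) 0) (aSym a) (Cst (cW w 0))
| r_W3 w k : inN k -> validW w k -> rule (cW w k) (aNum k) (Cst (cW w 0))
| r_W4 (a : Sigma) w k : inN k -> validW (a :: w) k ->
    rule (cW (a :: w) k) tau (Cst (cW w k))
| r_W5 (a : Sigma) w : validW (a :: w) 0 ->
    rule (cW (a :: w) 0) tau (Cst (cW w 0))
| r_W6 w k : inN k -> validW w k -> rule (cW w k) tau (Cst (cW w 0))
| r_W7 : validW [::] 0 -> rule (cW [::] 0) tau Eps.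

Inductive step : proc -> act -> proc -> Prop :=
| st_rule c l p : rule c l p -> step (Cst c) l p
| st_seq p l p' q : step p l p' -> step (Seq p q) l (Seq p' q)
| st_parl p l p' q : step p l p' -> step (Par p q) l (Par p' q)
| st_parr p l p' q : step p l p' -> step (Par q p) l (Par q p')
| st_cong p p1 l q1 q : cong p p1 -> step p1 l q1 -> cong q1 q -> step p l q.

Inductive wtau : proc -> proc -> Prop :=
| wt_refl p q : cong p q -> wtau p q
| wt_step p p' q : step p tau p' -> wtau p' q -> wtau p q.

End G.

(* Main.v *)
Require Import Defs.
From mathcomp Require Import all_boot.
Set Implicit Arguments. Unset Strict Implicit. Unset Printing Implicit Defensive.

Section L.
Variable Sigma : finType.
Variable inst : seq (seq Sigma * seq Sigma).

Definition code (c : const Sigma) : nat :=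
  match c with
  | cD => 0 | cC => 1 | cC' => 2
  | cG | cG' | cGu | cGv | cGv' | cZ => 3
  | cU k | cV k => if inN inst k then 3 else 4
  | cW w j => if validW inst w j then 3 else 4
  | _ => 4
  end.

Variable p0c : nat.
Hypothesis p0c_lt : p0c < 3.

Fixpoint allc (p : proc Sigma) : bool :=
  match p with
  | Eps => true
  | Cst c => (code c == 3) || (code c == p0c)
  | Seq p q | Par p q => allc p && allc q
  end.

Fixpoint cnt (p : proc Sigma) : nat :=
  match p with
  | Eps => 0
  | Cst c => (code c == p0c)
  | Seq p q | Par p q => cnt p + cnt q
  end.

Fixpoint allg (p : proc Sigma) : bool :=
  match p with
  | Eps => true
  | Cst c => code c == 3
  | Seq p q | Par p q => allg p && allg q
  end.

Lemma cong_inv p q : cong p q -> allc p = allc q /\ cnt p = cnt q.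
Proof.
elim=> /=.
- by split.
- by move=> ?? _ [-> ->].
- by move=> ??? _ [-> ->] _ [-> ->].
- by move=> ???? _ [-> ->] _ [-> ->].
- by move=> ???? _ [-> ->] _ [-> ->].
- by move=> ???; rewrite andbA addnA.
- by move=> ???; rewrite andbA addnA.
- by move=> ??; rewrite andbC addnC.
- by move=> ?; rewrite ?andbT ?addn0.
- by move=> ?; rewrite ?andbT ?addn0.
- by move=> ?; rewrite ?andbT ?addn0.
Qed.

Lemma validW_U k : inN inst k -> validW inst (uk inst k) k && validW inst (vk inst k) k.
Proof.
move=> hk; have hk' : k < (npairs inst).+1 by rewrite ltnS; case/andP: hk.
rewrite /validW hk orbT /=; apply/andP; split; apply/existsP;
  exists (Ordinal hk') => /=; by rewrite hk suffix_refl ?orbT.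
Qed.

Lemma validW_cons (a : Sigma) w j : validW inst (a :: w) j -> validW inst w j.
Proof.
case/andP=> h0 /existsP [k /andP [hk hs]]; rewrite /validW h0 /=; apply/existsP; exists k.
rewrite hk /=; case/orP: hs => hs; apply/orP; [left|right];
  exact: suffix_trans (suffix_cons w a) hs.
Qed.

Lemma validW_0 w j : validW inst w j -> validW inst w 0.
Proof. by case/andP=> _ h; rewrite /validW h. Qed.

Lemma ne4 : (4 == p0c) = false.
Proof. by apply/negbTE; rewrite eq_sym neq_ltn (ltn_trans p0c_lt). Qed.

Lemma ne3 : (3 == p0c) = false.
Proof. by apply/negbTE; rewrite eq_sym neq_ltn p0c_lt. Qed.

Lemma rule_inv c l p : rule inst c l p -> l = tau Sigma ->
  (code c == 3) || (code c == p0c) -> allc p && (cnt p <= (code c == p0c)).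
Proof.
case=> //= *; subst.
all: try (match goal with H : is_true (4 == p0c) |- _ => by rewrite ne4 in H end).
all: try (match goal with H : is_true (?n == p0c) |- _ => move/eqP: H => H; subst p0c end).
all: repeat match goal with
  | H : is_true (inN inst ?k) |- _ =>
      rewrite ?H; case/andP: (validW_U H) => ? ?; clear H
  | H : is_true (validW inst (?a :: ?w) ?k) |- _ =>
      rewrite ?H ?(validW_cons H); clear H
  | H : is_true (validW inst ?w ?k) |- _ =>
      rewrite ?H ?(validW_0 H); clear H
end.
all: by rewrite ?ne3 ?ne4 //=.
Qed.



Lemma step_inv p l q : step inst p l q -> l = tau Sigma -> allc p ->
  allc q && (cnt q <= cnt p).
Proof.
move=> hs; elim: hs => {p l q} /=.
- move=> c l p hr hl; exact: (rule_inv hr hl).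
- move=> p l p' q _ IH hl /andP [hp ->]; case/andP: (IH hl hp) => -> h.
  by rewrite leq_add2r h.
- move=> p l p' q _ IH hl /andP [hp ->]; case/andP: (IH hl hp) => -> h.
  by rewrite leq_add2r h.
- move=> p l p' q _ IH hl /andP [-> hp]; case/andP: (IH hl hp) => -> h.
  by rewrite leq_add2l h.
- move=> p p1 l q1 q hc _ IH hc2 hl hp.
  case: (cong_inv hc) => ea ec; case: (cong_inv hc2) => ea2 ec2.
  rewrite ea in hp; case/andP: (IH hl hp) => h1 h2.
  by rewrite -ea2 h1 -ec2 ec.
Qed.

Lemma wtau_inv p q : wtau inst p q -> allc p -> allc q && (cnt q <= cnt p).
Proof.
move=> hw; elim: hw => {p q}.
- by move=> p q hc; case: (cong_inv hc) => -> ->; rewrite leqnn andbT.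
- move=> p p' q hs _ IH hp; case/andP: (step_inv hs erefl hp) => h1 h2.
  case/andP: (IH h1) => -> h3; exact: leq_trans h3 h2.
Qed.

Lemma allg_of p : allc p -> cnt p = 0 -> allg p.
Proof.
elim: p => //=.
- by move=> c /orP [->|/eqP ->] //; rewrite eqxx.
- move=> p IHp q IHq /andP [h1 h2] /eqP; rewrite addn_eq0 => /andP [/eqP e1 /eqP e2].
  by rewrite IHp ?IHq.
- move=> p IHp q IHq /andP [h1 h2] /eqP; rewrite addn_eq0 => /andP [/eqP e1 /eqP e2].
  by rewrite IHp ?IHq.
Qed.

Lemma wtau_cong p q r : cong p q -> wtau inst q r -> wtau inst p r.
Proof.
move=> hc hw; case: hw hc.
- move=> q0 r0 h hc; apply: wt_refl; exact: cong_trans hc h.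
- move=> q0 q' r0 hs hw hc; apply: wt_step hw; exact: st_cong hc hs (cong_refl _).
Qed.

Lemma wtau_trans p q r : wtau inst p q -> wtau inst q r -> wtau inst p r.
Proof.
move=> hw; elim: hw => {p q}.
- move=> p q hc hw; exact: wtau_cong hc hw.
- move=> p p' q hs _ IH hw; exact: wt_step hs (IH hw).
Qed.

Lemma wtau_seq p p' q : wtau inst p p' -> wtau inst (Seq p q) (Seq p' q).
Proof.
move=> hw; elim: hw => {p p'}.
- by move=> p p' h; apply: wt_refl; apply: cong_seq => //; apply: cong_refl.
- move=> p p' r hs _ IH; apply: wt_step IH; exact: st_seq.
Qed.

Lemma wtau_parl p p' q : wtau inst p p' -> wtau inst (Par p q) (Par p' q).
Proof.
move=> hw; elim: hw => {p p'}.
- by move=> p p' h; apply: wt_refl; apply: cong_par => //; apply: cong_refl.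
- move=> p p' r hs _ IH; apply: wt_step IH; exact: st_parl.
Qed.

Lemma wtau_parr p p' q : wtau inst p p' -> wtau inst (Par q p) (Par q p').
Proof.
move=> hw; elim: hw => {p p'}.
- by move=> p p' h; apply: wt_refl; apply: cong_par => //; apply: cong_refl.
- move=> p p' r hs _ IH; apply: wt_step IH; exact: st_parr.
Qed.

Lemma tstep c p : rule inst c (tau Sigma) p -> wtau inst p (Eps Sigma) -> wtau inst (Cst c) (Eps Sigma).
Proof. by move=> hr; apply: wt_step; apply: st_rule. Qed.

Lemma eps_ok : wtau inst (Eps Sigma) (Eps Sigma).
Proof. apply: wt_refl; exact: cong_refl. Qed.

Lemma W0_good w : validW inst w 0 -> wtau inst (Cst (cW w 0)) (Eps Sigma).
Proof.
elim: w => [|a w IH] hw.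
- by apply: tstep (r_W7 hw) eps_ok.
- apply: tstep (r_W5 hw) (IH (validW_cons hw)).
Qed.

Lemma W_good w j : validW inst w j -> wtau inst (Cst (cW w j)) (Eps Sigma).
Proof.
case: j => [|j] hw; first exact: W0_good.
have hk : inN inst j.+1 by case/andP: hw.
apply: tstep (r_W6 hk hw) (W0_good (validW_0 hw)).
Qed.

Lemma Z_good : wtau inst (Cst (cZ Sigma)) (Eps Sigma).
Proof. exact: tstep (r_Z1 inst) eps_ok. Qed.

Lemma const_good c : code c == 3 -> wtau inst (Cst c) (Eps Sigma).
Proof.
case: c => //=.
- move=> _; exact: Z_good.
- move=> _; exact: tstep (r_G3 inst) eps_ok.
- move=> _; exact: tstep (r_G'5 inst) Z_good.
- move=> _; exact: tstep (r_Gu3 inst) (tstep (r_Gv'2 inst) Z_good).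
- move=> _; exact: tstep (r_Gv2 inst) eps_ok.
- move=> _; exact: tstep (r_Gv'2 inst) Z_good.
- move=> k; case hk: (inN inst k) => // _.
  case/andP: (validW_U hk) => h1 _; exact: tstep (r_U hk) (W_good h1).
- move=> k; case hk: (inN inst k) => // _.
  case/andP: (validW_U hk) => _ h1; exact: tstep (r_V hk) (W_good h1).
- move=> w j; case hw: (validW inst w j) => // _; exact: W_good.
Qed.

Lemma allg_good p : allg p -> wtau inst p (Eps Sigma).
Proof.
elim: p => /=.
- by move=> _; exact: eps_ok.
- exact: const_good.
- move=> p IHp q IHq /andP [h1 h2].
  apply: wtau_trans (wtau_seq q (IHp h1)) _.
  apply: wtau_cong (cong_seq0l _) (IHq h2).
- move=> p IHp q IHq /andP [h1 h2].
  apply: wtau_trans (wtau_parl q (IHp h1)) _.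
  apply: wtau_cong (cong_trans (cong_parC _ _) (cong_par0r _)) (IHq h2).
Qed.

End L.

Theorem lemma4 (Sigma : finType) (inst : seq (seq Sigma * seq Sigma)) :
  1 < #|Sigma| ->
  all (fun uv => (size uv.1 > 0) && (size uv.2 > 0)) inst ->
  forall (P Q : proc Sigma),
    (P = Cst (cD Sigma) \/ P = Cst (cC Sigma) \/ P = Cst (cC' Sigma)) ->
    proc_wf inst Q ->
    wtau inst P (Par P Q) ->
    wtau inst (Par P Q) P.
Proof.
move=> _ _ P Q hP _ hw.
have [c [eP hc]] : exists c, P = Cst c /\ code inst c < 3.
  by case: hP => [->|[->|->]]; eexists; split.
subst P.
have := wtau_inv hc hw; rewrite /= eqxx orbT => /(_ isT) /andP [/andP [_ hQ] hcnt].
have hQ0 : cnt inst (code inst c) Q = 0.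
  by move: hcnt; rewrite add1n ltnS leqn0 => /eqP.
have hg := allg_good (allg_of hQ hQ0).
apply: wtau_trans (wtau_parr (Cst c) hg) _.
apply: wt_refl; exact: cong_par0r.
Qed.
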